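(* Let $V$ be the crossed module with group part $\langle a\mid a^4=1\rangle\cong C_4$, module part $\langle b\mid b^4=1\rangle\cong C_4$, structure morphism $\mu(b)=a^2$ and action ${}^ab=b^{-1}$. Then for $n\in\mathbb N_0$ (with $\mathbb Z/n$ a trivial module, $\mathbb Z/0=\mathbb Z$), \[H^2(V,\mathbb Z/n)\cong\begin{cases}\mathbb Z/2 & n\text{ even},\\ 0 & n\text{ odd}.\end{cases}\]
   Context: A crossed module $V=(G_V,M_V,\mu)$: left action ${}^gm$ of $G_V$ on $M_V$, $\mu({}^gm)=g\mu(m)g^{-1}$, ${}^{\mu(n)}m=nmn^{-1}$. With $\bar g$ the class of $g$ in $\pi_0(V)=G_V/\mu(M_V)$ and $M$ an abelian $\pi_0(V)$-module, $H^2(V,M)$ is the second cohomology of $C^1(V,M)=\mathrm{Map}(G_V,M)\to C^2(V,M)=\mathrm{Map}(M_V\times G_V\times G_V,M)\to C^3(V,M)=\mathrm{Map}(M_V\times M_V\times G_V\times M_V\times G_V\times G_V,M)$, $(dc)(m,h,g)=c(\mu(m)h)-c(hg)+\bar hc(g)$, $(dc)(p,n,k,m,h,g)=c(p,\mu(n)k,\mu(m)h)-c(pn,k,hg)+c(n\,{}^km,kh,g)-\bar kc(m,h,g)$ (equivalently, the cohomology of the associated coskeleton simplicial group). *)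

(* Defs.v *)
From HB Require Import structures.
From mathcomp Require Import all_boot all_order all_algebra.
Set Implicit Arguments. Unset Strict Implicit. Unset Printing Implicit Defensive.
Import Order.TTheory GRing.Theory Num.Theory.
Local Open Scope ring_scope.

(* The crossed module V: both groups are C_4, written additively as 'Z_4
   (a^i <-> i : G, b^j <-> j : M). *)
Definition GV := 'Z_4.
Definition MV := 'Z_4.
Definition muV (m : MV) : GV := m *+ 2.
Definition actV (g : GV) (m : MV) : MV := if odd (val g) then - m else m.

(* Cochains with values in Z/n (trivial module), represented by integer
   valued maps; two cochains are equal in C^k(V,Z/n) iff they agree mod n
   pointwise (for n = 0 this is equality in Z). *)
Definition C1 := GV -> int.
Definition C2 := MV -> GV -> GV -> int.
Definition C3 := MV -> MV -> GV -> MV -> GV -> GV -> int.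

(* differentials, trivial action of pi_0(V) on the coefficients;
   group laws written additively: mu(m)h ~ muV m + h, hg ~ h + g,
   pn ~ p + n, n ^k m ~ n + actV k m *)
Definition d1 (c : C1) : C2 :=
  fun m h g => c (muV m + h) - c (h + g) + c g.
Definition d2 (c : C2) : C3 :=
  fun p n k m h g =>
    c p (muV n + k) (muV m + h) - c (p + n) k (h + g)
    + c (n + actV k m) (k + h) g - c m h g.

Definition cong (n : nat) (x y : int) : Prop := (n%:Z %| (x - y))%Z.

Definition cocycle2 (n : nat) (c : C2) : Prop :=
  forall p n' k m h g, cong n (d2 c p n' k m h g) 0.
Definition coboundary2 (n : nat) (c : C2) : Prop :=
  exists c1 : C1, forall m h g, cong n (c m h g) (d1 c1 m h g).

Definition addC2 (c c' : C2) : C2 := fun m h g => c m h g + c' m h g.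

(* Main.v *)
Require Import Defs.
From HB Require Import structures.
From mathcomp Require Import all_boot all_order all_algebra.
Set Implicit Arguments. Unset Strict Implicit. Unset Printing Implicit Defensive.
Import Order.TTheory GRing.Theory Num.Theory.
Local Open Scope ring_scope.

Section Lin.
Variable T : eqType.
Definition lin := seq (int * T).
Definition evalL (c : T -> int) (L : lin) :=
  foldr (fun x acc => x.1 * c x.2 + acc) 0 L.
Definition coefL (L : lin) t :=
  foldr (fun x acc => if x.2 == t then x.1 + acc else acc) 0 L.
Definition scaleL (k : int) (L : lin) : lin := map (fun x => (k * x.1, x.2)) L.
Lemma evalL_cat c L1 L2 : evalL c (L1 ++ L2) = evalL c L1 + evalL c L2.
Proof. elim: L1 => [|x L IH] /=; first by rewrite add0r. by rewrite IH addrA. Qed.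
Lemma evalL_scale c k L : evalL c (scaleL k L) = k * evalL c L.
Proof. elim: L => [|x L IH] /=; first by rewrite mulr0. by rewrite IH mulrDr mulrA. Qed.
Lemma evalL_add c c' L : evalL (fun t => c t + c' t) L = evalL c L + evalL c' L.
Proof. elim: L => [|x L IH] /=; first by rewrite addr0. by rewrite IH mulrDr addrACA. Qed.
End Lin.

Section LinFin.
Variable T : finType.
Lemma evalL_sum c (L : lin T) : evalL c L = \sum_t coefL L t * c t.
Proof.
elim: L => [|x L IH] /=; first by rewrite big1 // => t _; rewrite mul0r.
rewrite IH [RHS](bigD1 x.2) //= eqxx [in LHS](bigD1 x.2) //= mulrDl -addrA.
congr (_ + (_ + _)); apply: eq_bigr => t; rewrite eq_sym => /negbTE -> //.
Qed.
Lemma evalL_ext c (L L' : lin T) :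
  (forall t, coefL L t = coefL L' t) -> evalL c L = evalL c L'.
Proof. by move=> H; rewrite !evalL_sum; apply: eq_bigr => t _; rewrite H. Qed.
End LinFin.

Definition Tr := ('Z_4 * 'Z_4 * 'Z_4)%type.
Definition cT (c : C2) (t : Tr) : int := c t.1.1 t.1.2 t.2.
Definition z (k : nat) : 'Z_4 := inZp k.
Definition z4s : seq 'Z_4 := [:: z 0; z 1; z 2; z 3].
Lemma mem_z4s (x : 'Z_4) : x \in z4s.
Proof. by case: x => [[|[|[|[|k]]]] Hk]. Qed.
Definition allT : seq Tr := [seq (ab, d) | ab <- [seq (a, b) | a <- z4s, b <- z4s], d <- z4s].
Lemma mem_allT (t : Tr) : t \in allT.
Proof.
case: t => [[a b] d].
by apply: (allpairs_f (fun ab d => (ab, d))); [apply: allpairs_f|]; rewrite mem_z4s.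
Qed.

Definition d2s (c : C2) (s : seq nat) : int :=
  d2 c (z (nth 0 s 0)) (z (nth 0 s 1)) (z (nth 0 s 2))
       (z (nth 0 s 3)) (z (nth 0 s 4)) (z (nth 0 s 5)).
Definition d2L (s : seq nat) : lin Tr :=
  let p := z (nth 0 s 0) in let n := z (nth 0 s 1) in let k := z (nth 0 s 2) in
  let m := z (nth 0 s 3) in let h := z (nth 0 s 4) in let g := z (nth 0 s 5) in
  [:: (1, (p, muV n + k, muV m + h)); (-1, (p + n, k, h + g));
      (1, (n + actV k m, k + h, g)); (-1, (m, h, g))].
Lemma evalL_d2L c s : evalL (cT c) (d2L s) = d2s c s.
Proof. by rewrite /= /d2s /d2 /cT /= !mul1r !mulN1r addr0 !addrA. Qed.

Definition certE (c : C2) (L : seq (int * seq nat)) :=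
  foldr (fun x acc => x.1 * d2s c x.2 + acc) 0 L.
Definition certL (L : seq (int * seq nat)) : lin Tr :=
  flatten [seq scaleL x.1 (d2L x.2) | x <- L].
Lemma evalL_certL c L : evalL (cT c) (certL L) = certE c L.
Proof.
elim: L => [|x L IH] //.
change (certL (x :: L)) with (scaleL x.1 (d2L x.2) ++ certL L).
rewrite evalL_cat IH.
by rewrite evalL_scale evalL_d2L.
Qed.
Lemma certE_dvd n c L : cocycle2 n c -> (n%:Z %| certE c L)%Z.
Proof.
move=> Hc; elim: L => [|x L IH] //=; apply: rpredD => //; apply: dvdz_mull.
by have := Hc (z (nth 0 x.2 0)) (z (nth 0 x.2 1)) (z (nth 0 x.2 2))
  (z (nth 0 x.2 3)) (z (nth 0 x.2 4)) (z (nth 0 x.2 5)); rewrite /cong subr0.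
Qed.

Local Open Scope nat_scope.
Definition certTable : seq (seq (int * seq nat)) := [::
  [:: ];
  [:: ((- 1%:Z), [:: 0; 0; 0; 0; 0; 1])];
  [:: ((- 1%:Z), [:: 0; 0; 0; 0; 0; 2])];
  [:: ((- 1%:Z), [:: 0; 0; 0; 0; 0; 3])];
  [:: (1%:Z, [:: 0; 0; 1; 0; 0; 0])];
  [:: ];
  [:: ];
  [:: (1%:Z, [:: 0; 0; 0; 0; 0; 1]); ((- 1%:Z), [:: 0; 0; 0; 0; 0; 3]); ((- 1%:Z), [:: 0; 0; 1; 0; 0; 0]); ((- 1%:Z), [:: 0; 0; 1; 0; 1; 0]); ((- 1%:Z), [:: 0; 0; 1; 0; 2; 0]); (1%:Z, [:: 0; 1; 0; 0; 2; 2]); (1%:Z, [:: 0; 1; 2; 0; 1; 1]); (1%:Z, [:: 0; 1; 3; 1; 0; 0]); ((- 1%:Z), [:: 1; 0; 3; 0; 1; 3])];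
  [:: (1%:Z, [:: 0; 0; 1; 0; 0; 0]); (1%:Z, [:: 0; 0; 1; 0; 1; 0])];
  [:: (1%:Z, [:: 0; 0; 1; 0; 1; 1])];
  [:: ((- 1%:Z), [:: 0; 0; 0; 0; 0; 1]); ((- 1%:Z), [:: 0; 0; 0; 0; 0; 2]); ((- 3%:Z), [:: 0; 0; 1; 0; 0; 0]); ((- 2%:Z), [:: 0; 0; 1; 0; 1; 0]); ((- 1%:Z), [:: 0; 0; 1; 0; 1; 1]); ((- 1%:Z), [:: 0; 0; 1; 1; 0; 0]); (2%:Z, [:: 0; 1; 0; 0; 2; 2]); (2%:Z, [:: 0; 1; 0; 1; 2; 2]); ((- 1%:Z), [:: 0; 1; 2; 1; 0; 2]); ((- 1%:Z), [:: 0; 1; 3; 0; 1; 2]); (1%:Z, [:: 0; 2; 2; 1; 3; 3]); (1%:Z, [:: 1; 0; 0; 0; 0; 3]); (1%:Z, [:: 1; 0; 1; 0; 0; 1]); ((- 1%:Z), [:: 1; 0; 1; 0; 0; 2]); ((- 1%:Z), [:: 1; 0; 1; 1; 0; 3]); ((- 1%:Z), [:: 1; 0; 1; 3; 1; 0]); (1%:Z, [:: 1; 0; 2; 0; 0; 2])];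
  [:: ((- 1%:Z), [:: 0; 0; 0; 0; 0; 1]); ((- 1%:Z), [:: 0; 0; 0; 0; 0; 2]); ((- 1%:Z), [:: 0; 0; 0; 0; 0; 3]); ((- 3%:Z), [:: 0; 0; 1; 0; 0; 0]); ((- 2%:Z), [:: 0; 0; 1; 0; 1; 0]); ((- 1%:Z), [:: 0; 0; 1; 0; 1; 1]); ((- 1%:Z), [:: 0; 0; 1; 1; 0; 0]); (1%:Z, [:: 0; 1; 0; 0; 2; 2]); (2%:Z, [:: 0; 1; 0; 1; 2; 2]); ((- 1%:Z), [:: 0; 1; 2; 1; 0; 2]); ((- 1%:Z), [:: 0; 1; 3; 0; 1; 2]); (1%:Z, [:: 0; 2; 2; 1; 3; 3]); (1%:Z, [:: 1; 0; 1; 0; 0; 1]); ((- 1%:Z), [:: 1; 0; 1; 3; 1; 0]); (1%:Z, [:: 1; 0; 1; 3; 1; 3]); (1%:Z, [:: 1; 0; 2; 0; 0; 3])];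
  [:: (1%:Z, [:: 0; 0; 1; 0; 0; 0]); (1%:Z, [:: 0; 0; 1; 0; 1; 0]); (1%:Z, [:: 0; 0; 1; 0; 2; 0])];
  [:: (1%:Z, [:: 0; 0; 0; 0; 0; 3]); ((- 1%:Z), [:: 0; 0; 1; 0; 1; 0]); ((- 1%:Z), [:: 0; 0; 1; 0; 2; 0]); (1%:Z, [:: 0; 0; 1; 1; 0; 0]); (1%:Z, [:: 0; 1; 0; 0; 2; 2]); (1%:Z, [:: 0; 1; 2; 3; 1; 0]); (1%:Z, [:: 1; 0; 2; 0; 1; 1])];
  [:: ((- 1%:Z), [:: 0; 0; 0; 0; 0; 2]); (1%:Z, [:: 0; 0; 0; 0; 0; 3]); ((- 1%:Z), [:: 0; 0; 1; 0; 1; 0]); ((- 1%:Z), [:: 0; 0; 1; 0; 2; 0]); (1%:Z, [:: 0; 0; 1; 1; 0; 0]); (1%:Z, [:: 0; 1; 2; 3; 1; 0]); ((- 1%:Z), [:: 1; 0; 0; 0; 0; 3]); (1%:Z, [:: 1; 0; 1; 0; 0; 2]); (1%:Z, [:: 1; 0; 1; 1; 0; 3]); (1%:Z, [:: 1; 0; 1; 3; 1; 3]); (1%:Z, [:: 1; 0; 2; 0; 1; 2])];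
  [:: ((- 1%:Z), [:: 0; 0; 0; 0; 0; 2]); ((- 1%:Z), [:: 0; 0; 0; 0; 0; 3]); ((- 2%:Z), [:: 0; 0; 1; 0; 0; 0]); ((- 2%:Z), [:: 0; 0; 1; 0; 1; 0]); ((- 1%:Z), [:: 0; 0; 1; 0; 2; 0]); (1%:Z, [:: 0; 1; 0; 1; 2; 2]); ((- 1%:Z), [:: 0; 1; 2; 1; 0; 2]); ((- 1%:Z), [:: 0; 1; 3; 0; 1; 2]); (1%:Z, [:: 0; 1; 3; 1; 0; 0]); (1%:Z, [:: 1; 0; 3; 0; 0; 3])];
  [:: ];
  [:: ((- 1%:Z), [:: 1; 0; 0; 0; 0; 1])];
  [:: ((- 1%:Z), [:: 0; 0; 0; 0; 0; 2]); ((- 1%:Z), [:: 0; 0; 1; 0; 0; 0]); ((- 1%:Z), [:: 0; 0; 1; 0; 1; 0]); (1%:Z, [:: 0; 1; 0; 1; 2; 2]); ((- 1%:Z), [:: 0; 1; 2; 1; 0; 2])];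
  [:: ((- 1%:Z), [:: 1; 0; 0; 0; 0; 3])];
  [:: ((- 1%:Z), [:: 0; 0; 0; 0; 0; 1]); ((- 1%:Z), [:: 0; 0; 0; 0; 0; 2]); ((- 1%:Z), [:: 0; 0; 1; 0; 0; 0]); ((- 1%:Z), [:: 0; 0; 1; 0; 1; 0]); (1%:Z, [:: 0; 0; 1; 0; 1; 1]); (1%:Z, [:: 0; 1; 0; 1; 2; 2]); ((- 1%:Z), [:: 0; 1; 2; 1; 0; 2]); ((- 1%:Z), [:: 0; 1; 3; 0; 1; 2]); (1%:Z, [:: 0; 1; 3; 0; 2; 1]); (1%:Z, [:: 1; 0; 1; 0; 0; 1])];
  [:: ((- 1%:Z), [:: 0; 0; 0; 0; 0; 2]); ((- 1%:Z), [:: 0; 0; 1; 0; 0; 0]); ((- 1%:Z), [:: 0; 0; 1; 0; 1; 0]); (1%:Z, [:: 0; 0; 1; 0; 1; 1]); (1%:Z, [:: 0; 1; 0; 1; 2; 2]); ((- 1%:Z), [:: 0; 1; 2; 1; 0; 2]); ((- 1%:Z), [:: 0; 1; 3; 0; 1; 2]); (1%:Z, [:: 0; 1; 3; 0; 2; 1])];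
  [:: ((- 1%:Z), [:: 0; 0; 0; 0; 0; 1]); ((- 1%:Z), [:: 0; 0; 1; 0; 0; 0]); ((- 1%:Z), [:: 0; 0; 1; 0; 1; 0]); (1%:Z, [:: 0; 0; 1; 0; 1; 1]); (1%:Z, [:: 0; 1; 0; 1; 2; 2]); ((- 1%:Z), [:: 0; 1; 2; 1; 0; 2]); ((- 1%:Z), [:: 0; 1; 3; 0; 1; 2]); (1%:Z, [:: 0; 1; 3; 0; 2; 1]); (1%:Z, [:: 1; 0; 1; 0; 0; 1]); ((- 1%:Z), [:: 1; 0; 1; 0; 0; 2])];
  [:: ((- 1%:Z), [:: 0; 0; 0; 0; 0; 1]); ((- 1%:Z), [:: 0; 0; 0; 0; 0; 2]); ((- 3%:Z), [:: 0; 0; 1; 0; 0; 0]); ((- 3%:Z), [:: 0; 0; 1; 0; 1; 0]); (1%:Z, [:: 0; 1; 0; 0; 2; 2]); (3%:Z, [:: 0; 1; 0; 1; 2; 2]); ((- 2%:Z), [:: 0; 1; 2; 1; 0; 2]); ((- 2%:Z), [:: 0; 1; 3; 0; 1; 2]); (1%:Z, [:: 0; 1; 3; 0; 2; 1]); (1%:Z, [:: 0; 2; 2; 1; 3; 3]); (1%:Z, [:: 1; 0; 0; 0; 0; 3]); (1%:Z, [:: 1; 0; 1; 0; 0; 1]); ((- 1%:Z), [:: 1; 0; 1; 0; 0; 2]); ((- 1%:Z), [:: 1; 0; 1; 1; 0; 3])];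
  [:: (1%:Z, [:: 0; 0; 0; 0; 0; 1]); (3%:Z, [:: 0; 0; 1; 0; 0; 0]); (2%:Z, [:: 0; 0; 1; 0; 1; 0]); (1%:Z, [:: 0; 0; 1; 0; 1; 1]); (1%:Z, [:: 0; 0; 1; 1; 0; 0]); ((- 1%:Z), [:: 0; 1; 0; 0; 2; 2]); ((- 2%:Z), [:: 0; 1; 0; 1; 2; 2]); (1%:Z, [:: 0; 1; 2; 1; 0; 2]); (1%:Z, [:: 0; 1; 3; 0; 1; 2]); ((- 1%:Z), [:: 0; 2; 2; 1; 3; 3]); ((- 1%:Z), [:: 1; 0; 0; 0; 0; 3]); ((- 1%:Z), [:: 1; 0; 1; 0; 0; 1]); (1%:Z, [:: 1; 0; 1; 0; 0; 2]); (1%:Z, [:: 1; 0; 1; 1; 0; 3]); (1%:Z, [:: 1; 0; 1; 3; 1; 0])];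
  [:: ((- 1%:Z), [:: 0; 0; 0; 0; 0; 3]); (1%:Z, [:: 0; 0; 1; 0; 1; 0]); (1%:Z, [:: 0; 0; 1; 0; 2; 0]); ((- 1%:Z), [:: 0; 0; 1; 1; 0; 0]); ((- 1%:Z), [:: 0; 1; 2; 3; 1; 0])];
  [:: (1%:Z, [:: 0; 1; 0; 0; 2; 2])];
  [:: ((- 1%:Z), [:: 0; 0; 0; 0; 0; 2]); ((- 1%:Z), [:: 1; 0; 0; 0; 0; 3]); (1%:Z, [:: 1; 0; 1; 0; 0; 2]); (1%:Z, [:: 1; 0; 1; 1; 0; 3]); (1%:Z, [:: 1; 0; 1; 3; 1; 3])];
  [:: (1%:Z, [:: 0; 0; 1; 0; 0; 0]); (1%:Z, [:: 0; 0; 1; 0; 1; 0]); (1%:Z, [:: 0; 0; 1; 0; 2; 0]); ((- 1%:Z), [:: 0; 1; 3; 1; 0; 0])];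
  [:: (1%:Z, [:: 0; 0; 0; 0; 0; 1]); (1%:Z, [:: 0; 1; 0; 0; 2; 2]); (1%:Z, [:: 0; 1; 2; 0; 1; 1])];
  [:: ((- 1%:Z), [:: 0; 0; 0; 0; 0; 1]); ((- 1%:Z), [:: 0; 0; 1; 0; 0; 0]); ((- 1%:Z), [:: 0; 0; 1; 0; 1; 0]); (1%:Z, [:: 0; 0; 1; 0; 1; 1]); (1%:Z, [:: 0; 1; 0; 1; 2; 2]); ((- 1%:Z), [:: 0; 1; 2; 1; 0; 2]); ((- 1%:Z), [:: 0; 1; 3; 0; 1; 2]); (1%:Z, [:: 0; 1; 3; 0; 2; 1]); (1%:Z, [:: 1; 0; 1; 0; 0; 1]); ((- 1%:Z), [:: 1; 0; 1; 0; 0; 2]); (1%:Z, [:: 1; 0; 1; 1; 1; 2]); (1%:Z, [:: 1; 0; 1; 3; 2; 2])];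
  [:: ((- 1%:Z), [:: 0; 0; 0; 0; 0; 2]); ((- 1%:Z), [:: 0; 0; 1; 0; 0; 0]); ((- 1%:Z), [:: 0; 0; 1; 0; 1; 0]); (1%:Z, [:: 0; 1; 0; 1; 2; 2]); ((- 1%:Z), [:: 0; 1; 2; 1; 0; 2]); ((- 1%:Z), [:: 0; 1; 3; 0; 1; 2])];
  [:: (1%:Z, [:: 0; 0; 0; 0; 0; 1]); (3%:Z, [:: 0; 0; 1; 0; 0; 0]); (2%:Z, [:: 0; 0; 1; 0; 1; 0]); (1%:Z, [:: 0; 0; 1; 0; 1; 1]); (1%:Z, [:: 0; 0; 1; 1; 0; 0]); ((- 1%:Z), [:: 0; 1; 0; 0; 2; 2]); ((- 2%:Z), [:: 0; 1; 0; 1; 2; 2]); (1%:Z, [:: 0; 1; 2; 1; 0; 2]); (1%:Z, [:: 0; 1; 3; 0; 1; 2]); ((- 1%:Z), [:: 0; 2; 2; 1; 3; 3]); ((- 1%:Z), [:: 1; 0; 0; 0; 0; 3]); ((- 1%:Z), [:: 1; 0; 1; 0; 0; 1]); (1%:Z, [:: 1; 0; 1; 0; 0; 2]); (1%:Z, [:: 1; 0; 1; 1; 0; 3]); (1%:Z, [:: 1; 0; 1; 3; 1; 0]); ((- 1%:Z), [:: 1; 1; 0; 0; 0; 0])];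
  [:: (1%:Z, [:: 0; 0; 0; 0; 0; 1]); (1%:Z, [:: 0; 0; 1; 0; 0; 0]); (1%:Z, [:: 0; 0; 1; 0; 1; 0]); (2%:Z, [:: 0; 0; 1; 0; 1; 1]); ((- 1%:Z), [:: 0; 0; 1; 0; 2; 0]); (1%:Z, [:: 0; 0; 1; 1; 0; 0]); ((- 2%:Z), [:: 0; 1; 0; 1; 2; 2]); (1%:Z, [:: 0; 1; 2; 0; 1; 1]); (1%:Z, [:: 0; 1; 2; 1; 0; 2]); (1%:Z, [:: 0; 1; 2; 3; 1; 0]); ((- 1%:Z), [:: 0; 1; 2; 3; 2; 3]); (1%:Z, [:: 0; 1; 3; 0; 1; 2]); (1%:Z, [:: 0; 1; 3; 3; 2; 3]); (1%:Z, [:: 0; 2; 1; 0; 2; 1]); ((- 1%:Z), [:: 0; 2; 2; 1; 3; 3]); ((- 1%:Z), [:: 1; 0; 0; 0; 0; 3]); (1%:Z, [:: 1; 0; 1; 0; 0; 2]); (1%:Z, [:: 1; 0; 1; 1; 0; 3]); (1%:Z, [:: 1; 0; 1; 2; 3; 1])];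
  [:: (1%:Z, [:: 0; 0; 0; 0; 0; 1]); (2%:Z, [:: 0; 0; 1; 0; 0; 0]); (1%:Z, [:: 0; 0; 1; 0; 1; 0]); (2%:Z, [:: 0; 0; 1; 0; 1; 1]); ((- 1%:Z), [:: 0; 0; 1; 0; 2; 0]); (1%:Z, [:: 0; 0; 1; 1; 0; 0]); ((- 1%:Z), [:: 0; 1; 0; 0; 2; 2]); ((- 2%:Z), [:: 0; 1; 0; 1; 2; 2]); (1%:Z, [:: 0; 1; 2; 1; 0; 2]); (1%:Z, [:: 0; 1; 3; 0; 1; 2]); (1%:Z, [:: 0; 1; 3; 1; 0; 0]); ((- 1%:Z), [:: 0; 2; 2; 1; 3; 0]); ((- 1%:Z), [:: 0; 2; 2; 1; 3; 3]); ((- 1%:Z), [:: 0; 2; 3; 0; 3; 3]); ((- 1%:Z), [:: 1; 0; 0; 0; 0; 3]); ((- 1%:Z), [:: 1; 0; 1; 0; 0; 1]); (1%:Z, [:: 1; 0; 1; 0; 0; 2]); (1%:Z, [:: 1; 0; 1; 1; 0; 3]); (1%:Z, [:: 1; 0; 1; 2; 3; 2])];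
  [:: (1%:Z, [:: 0; 0; 0; 0; 0; 1]); (1%:Z, [:: 0; 0; 1; 0; 0; 0]); (1%:Z, [:: 0; 0; 1; 0; 1; 0]); (1%:Z, [:: 0; 0; 1; 0; 1; 1]); ((- 1%:Z), [:: 0; 0; 1; 0; 2; 0]); (1%:Z, [:: 0; 0; 1; 1; 0; 0]); ((- 2%:Z), [:: 0; 1; 0; 1; 2; 2]); (1%:Z, [:: 0; 1; 2; 0; 1; 1]); (1%:Z, [:: 0; 1; 2; 1; 0; 2]); (1%:Z, [:: 0; 1; 2; 3; 1; 0]); ((- 1%:Z), [:: 0; 1; 2; 3; 2; 3]); (1%:Z, [:: 0; 1; 3; 0; 1; 2]); (1%:Z, [:: 0; 1; 3; 3; 2; 3]); ((- 1%:Z), [:: 0; 2; 2; 1; 3; 3]); ((- 1%:Z), [:: 1; 0; 0; 0; 0; 3]); (1%:Z, [:: 1; 0; 1; 0; 0; 2]); (1%:Z, [:: 1; 0; 1; 1; 0; 3]); ((- 1%:Z), [:: 1; 0; 1; 2; 0; 3])];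
  [:: (3%:Z, [:: 0; 0; 1; 0; 1; 1]); ((- 1%:Z), [:: 0; 0; 1; 0; 2; 0]); (1%:Z, [:: 0; 0; 1; 1; 0; 0]); ((- 1%:Z), [:: 0; 1; 0; 1; 2; 2]); (1%:Z, [:: 0; 1; 2; 0; 1; 1]); (1%:Z, [:: 0; 1; 2; 3; 1; 0]); ((- 1%:Z), [:: 0; 1; 2; 3; 2; 3]); (1%:Z, [:: 0; 1; 3; 0; 2; 1]); (1%:Z, [:: 0; 1; 3; 3; 2; 3]); (1%:Z, [:: 0; 2; 1; 0; 2; 1]); ((- 1%:Z), [:: 0; 2; 2; 1; 3; 3]); (1%:Z, [:: 1; 0; 1; 0; 0; 1]); (1%:Z, [:: 1; 0; 1; 2; 3; 1]); ((- 1%:Z), [:: 1; 0; 1; 3; 1; 3]); (1%:Z, [:: 1; 1; 0; 1; 1; 0])];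
  [:: (1%:Z, [:: 0; 0; 0; 0; 0; 1]); ((- 1%:Z), [:: 0; 0; 0; 0; 0; 3]); ((- 1%:Z), [:: 0; 0; 1; 0; 0; 0]); (1%:Z, [:: 0; 0; 1; 0; 1; 1]); (1%:Z, [:: 0; 1; 2; 0; 1; 1]); ((- 1%:Z), [:: 0; 1; 2; 3; 2; 3]); (1%:Z, [:: 0; 1; 3; 3; 2; 3]); (1%:Z, [:: 0; 2; 1; 0; 2; 1]); ((- 1%:Z), [:: 1; 0; 2; 2; 1; 1])];
  [:: (1%:Z, [:: 0; 0; 0; 0; 0; 1]); (1%:Z, [:: 0; 0; 1; 0; 0; 0]); (1%:Z, [:: 0; 0; 1; 0; 1; 0]); (1%:Z, [:: 0; 0; 1; 0; 1; 1]); ((- 1%:Z), [:: 0; 1; 0; 1; 2; 2]); (1%:Z, [:: 0; 1; 2; 1; 0; 2]); (1%:Z, [:: 0; 1; 3; 0; 1; 2]); ((- 1%:Z), [:: 0; 2; 2; 1; 3; 3]); ((- 1%:Z), [:: 1; 0; 0; 0; 0; 3]); ((- 1%:Z), [:: 1; 0; 1; 0; 0; 1]); (1%:Z, [:: 1; 0; 1; 0; 0; 2]); (1%:Z, [:: 1; 0; 1; 1; 0; 3]); ((- 1%:Z), [:: 1; 0; 1; 2; 1; 2])];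
  [:: (1%:Z, [:: 0; 0; 0; 0; 0; 1]); ((- 1%:Z), [:: 0; 0; 1; 0; 0; 0]); ((- 1%:Z), [:: 0; 0; 1; 0; 1; 0]); ((- 1%:Z), [:: 0; 0; 1; 0; 2; 0]); (1%:Z, [:: 0; 0; 1; 1; 0; 0]); (1%:Z, [:: 0; 1; 0; 0; 2; 2]); (1%:Z, [:: 0; 1; 2; 0; 1; 1]); (1%:Z, [:: 0; 1; 2; 3; 1; 0]); ((- 1%:Z), [:: 0; 1; 2; 3; 2; 3]); (1%:Z, [:: 0; 1; 3; 3; 2; 3])];
  [:: (1%:Z, [:: 0; 0; 0; 0; 0; 1]); (2%:Z, [:: 0; 0; 1; 0; 0; 0]); (1%:Z, [:: 0; 0; 1; 0; 1; 0]); (2%:Z, [:: 0; 0; 1; 0; 1; 1]); ((- 1%:Z), [:: 0; 0; 1; 0; 2; 0]); (1%:Z, [:: 0; 0; 1; 1; 0; 0]); ((- 1%:Z), [:: 0; 1; 0; 0; 2; 2]); ((- 2%:Z), [:: 0; 1; 0; 1; 2; 2]); (1%:Z, [:: 0; 1; 2; 1; 0; 2]); (1%:Z, [:: 0; 1; 3; 0; 1; 2]); (1%:Z, [:: 0; 1; 3; 1; 0; 0]); ((- 1%:Z), [:: 0; 2; 2; 1; 3; 0]); ((- 1%:Z), [:: 0; 2; 2; 1; 3; 3]); ((- 1%:Z), [:: 0; 2; 3; 0; 3; 3]); ((- 1%:Z), [:: 1; 0; 0; 0; 0; 3]); ((- 1%:Z), [:: 1; 0; 1; 0; 0; 1]);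 (1%:Z, [:: 1; 0; 1; 0; 0; 2]); (1%:Z, [:: 1; 0; 1; 1; 0; 3]); (1%:Z, [:: 1; 0; 1; 2; 3; 2]); (1%:Z, [:: 1; 1; 0; 1; 2; 0])];
  [:: (1%:Z, [:: 0; 0; 0; 0; 0; 1]); (1%:Z, [:: 0; 0; 0; 0; 0; 2]); (1%:Z, [:: 0; 0; 1; 0; 0; 0]); (1%:Z, [:: 0; 0; 1; 0; 1; 0]); (2%:Z, [:: 0; 0; 1; 0; 1; 1]); ((- 1%:Z), [:: 0; 0; 1; 0; 2; 0]); (1%:Z, [:: 0; 0; 1; 1; 0; 0]); ((- 2%:Z), [:: 0; 1; 0; 1; 2; 2]); (1%:Z, [:: 0; 1; 2; 0; 1; 1]); (1%:Z, [:: 0; 1; 2; 1; 0; 2]); (1%:Z, [:: 0; 1; 2; 3; 1; 0]); ((- 1%:Z), [:: 0; 1; 2; 3; 2; 3]); (1%:Z, [:: 0; 1; 3; 0; 1; 2]); (1%:Z, [:: 0; 1; 3; 3; 2; 3]); (1%:Z, [:: 0; 2; 1; 0; 2; 1]); ((- 1%:Z), [:: 0; 2; 2; 1; 3; 3]); ((- 1%:Z), [:: 1; 0; 0; 0; 0; 3]); (1%:Z, [:: 1; 0; 1; 1; 0; 3]); ((- 1%:Z), [:: 1; 0; 1; 2; 2; 1])];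
  [:: ((- 1%:Z), [:: 0; 0; 1; 0; 0; 0]); ((- 1%:Z), [:: 0; 0; 1; 0; 1; 0]); (1%:Z, [:: 0; 1; 0; 0; 2; 2]); (1%:Z, [:: 0; 1; 0; 1; 2; 2])];
  [:: ((- 1%:Z), [:: 0; 0; 1; 0; 1; 0]); (1%:Z, [:: 0; 0; 1; 0; 1; 1]); ((- 1%:Z), [:: 0; 0; 1; 0; 2; 0]); (1%:Z, [:: 0; 0; 1; 1; 0; 0]); (1%:Z, [:: 0; 1; 3; 1; 0; 0]); ((- 1%:Z), [:: 0; 2; 2; 1; 3; 0])];
  [:: (1%:Z, [:: 0; 0; 0; 0; 0; 1]); (1%:Z, [:: 0; 0; 0; 0; 0; 3]); (2%:Z, [:: 0; 0; 1; 0; 0; 0]); (1%:Z, [:: 0; 0; 1; 0; 1; 0]); (1%:Z, [:: 0; 0; 1; 0; 1; 1]); ((- 1%:Z), [:: 0; 0; 1; 0; 2; 0]); (2%:Z, [:: 0; 0; 1; 1; 0; 0]); ((- 2%:Z), [:: 0; 1; 0; 1; 2; 2]); (1%:Z, [:: 0; 1; 2; 0; 1; 1]); (1%:Z, [:: 0; 1; 2; 1; 0; 2]); (2%:Z, [:: 0; 1; 2; 3; 1; 0]); ((- 1%:Z), [:: 0; 1; 2; 3; 2; 3]); (1%:Z, [:: 0; 1; 3; 0; 1; 2]); ((- 1%:Z), [:: 0; 1; 3; 1; 0; 0]); (1%:Z, [:: 0; 1; 3; 3; 2; 3]); ((- 1%:Z), [:: 0; 2; 2; 1; 3; 3]); ((-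 1%:Z), [:: 1; 0; 0; 0; 0; 3]); (1%:Z, [:: 1; 0; 1; 0; 0; 2]); (1%:Z, [:: 1; 0; 1; 1; 0; 3]); ((- 1%:Z), [:: 1; 0; 1; 2; 0; 3]); (1%:Z, [:: 1; 1; 0; 1; 3; 0])];
  [:: (1%:Z, [:: 0; 0; 0; 0; 0; 1]); ((- 1%:Z), [:: 0; 0; 1; 0; 0; 0]); ((- 1%:Z), [:: 0; 0; 1; 0; 1; 0]); (1%:Z, [:: 0; 0; 1; 0; 1; 1]); ((- 1%:Z), [:: 0; 0; 1; 0; 2; 0]); (1%:Z, [:: 0; 0; 1; 1; 0; 0]); (1%:Z, [:: 0; 1; 0; 0; 2; 2]); (1%:Z, [:: 0; 1; 2; 0; 1; 1]); (1%:Z, [:: 0; 1; 2; 3; 1; 0]); ((- 1%:Z), [:: 0; 1; 2; 3; 2; 3]); (1%:Z, [:: 0; 1; 3; 3; 2; 3]); (1%:Z, [:: 0; 2; 1; 0; 2; 1])];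
  [:: ((- 1%:Z), [:: 0; 0; 1; 0; 1; 0]); (1%:Z, [:: 0; 0; 1; 0; 1; 1]); ((- 1%:Z), [:: 0; 0; 1; 0; 2; 0]); (1%:Z, [:: 0; 0; 1; 1; 0; 0]); (1%:Z, [:: 0; 1; 3; 1; 0; 0]); ((- 1%:Z), [:: 0; 2; 2; 1; 3; 0]); ((- 1%:Z), [:: 0; 2; 3; 0; 3; 3])];
  [:: ((- 1%:Z), [:: 0; 0; 0; 0; 0; 2]); (1%:Z, [:: 0; 0; 0; 0; 0; 3]); ((- 1%:Z), [:: 0; 0; 1; 0; 1; 0]); (1%:Z, [:: 0; 0; 1; 0; 1; 1]); (1%:Z, [:: 0; 0; 1; 1; 0; 0]); (1%:Z, [:: 0; 1; 0; 1; 2; 2]); ((- 1%:Z), [:: 0; 1; 2; 1; 0; 2]); (1%:Z, [:: 0; 1; 2; 3; 1; 0]); ((- 1%:Z), [:: 0; 1; 3; 0; 1; 2]); (1%:Z, [:: 0; 1; 3; 0; 2; 1]); ((- 1%:Z), [:: 0; 2; 3; 1; 2; 1])];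
  [:: ((- 1%:Z), [:: 0; 0; 0; 0; 0; 1]); ((- 1%:Z), [:: 0; 0; 1; 0; 0; 0]); ((- 1%:Z), [:: 0; 0; 1; 0; 1; 0]); ((- 1%:Z), [:: 0; 0; 1; 0; 1; 1]); (1%:Z, [:: 0; 0; 1; 0; 2; 0]); (1%:Z, [:: 0; 1; 0; 0; 2; 2]); (2%:Z, [:: 0; 1; 0; 1; 2; 2]); ((- 1%:Z), [:: 0; 1; 2; 1; 0; 2]); ((- 1%:Z), [:: 0; 1; 3; 0; 1; 2]); ((- 1%:Z), [:: 0; 1; 3; 1; 0; 0]); (1%:Z, [:: 0; 2; 2; 1; 3; 3]); (1%:Z, [:: 1; 0; 0; 0; 0; 3]); (1%:Z, [:: 1; 0; 1; 0; 0; 1]); ((- 1%:Z), [:: 1; 0; 1; 0; 0; 2]); ((- 1%:Z), [:: 1; 0; 1; 1; 0; 3]); (1%:Z, [:: 1; 0; 1; 1; 3; 0])];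
  [:: (1%:Z, [:: 0; 0; 1; 0; 1; 1]); (1%:Z, [:: 0; 0; 1; 1; 0; 0]); ((- 1%:Z), [:: 0; 3; 0; 0; 1; 0])];
  [:: ((- 1%:Z), [:: 0; 0; 0; 0; 0; 1]); ((- 1%:Z), [:: 0; 0; 1; 0; 0; 0]); ((- 1%:Z), [:: 0; 0; 1; 0; 1; 0]); (1%:Z, [:: 0; 0; 1; 0; 1; 1]); (1%:Z, [:: 0; 1; 0; 1; 2; 2]); ((- 1%:Z), [:: 0; 1; 2; 1; 0; 2]); ((- 1%:Z), [:: 0; 1; 3; 0; 1; 2]); (1%:Z, [:: 0; 1; 3; 0; 2; 1]); (1%:Z, [:: 1; 0; 1; 0; 0; 1]); ((- 1%:Z), [:: 1; 0; 1; 0; 0; 2]); ((- 1%:Z), [:: 1; 0; 1; 3; 0; 2])];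
  [:: (1%:Z, [:: 0; 0; 1; 0; 1; 1]); (1%:Z, [:: 0; 0; 1; 0; 2; 0]); (1%:Z, [:: 0; 1; 0; 0; 2; 2]); (1%:Z, [:: 0; 1; 0; 1; 2; 2]); ((- 1%:Z), [:: 0; 1; 3; 1; 0; 0]); (1%:Z, [:: 0; 1; 3; 2; 2; 2]); ((- 1%:Z), [:: 0; 3; 0; 0; 1; 2])];
  [:: (1%:Z, [:: 0; 0; 1; 0; 0; 0]); (1%:Z, [:: 0; 0; 1; 1; 0; 0])];
  [:: (1%:Z, [:: 0; 0; 0; 0; 0; 1]); ((- 1%:Z), [:: 0; 0; 0; 0; 0; 2]); ((- 1%:Z), [:: 1; 0; 0; 0; 0; 1]); ((- 1%:Z), [:: 1; 0; 1; 0; 0; 1]); (1%:Z, [:: 1; 0; 1; 0; 0; 2]); (1%:Z, [:: 1; 0; 1; 1; 0; 1])];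
  [:: (1%:Z, [:: 0; 0; 1; 0; 2; 0]); (1%:Z, [:: 0; 1; 0; 0; 2; 2]); (1%:Z, [:: 0; 1; 0; 1; 2; 2]); ((- 1%:Z), [:: 0; 1; 3; 1; 0; 0]); (1%:Z, [:: 0; 1; 3; 2; 2; 2])];
  [:: ((- 1%:Z), [:: 0; 0; 0; 0; 0; 2]); ((- 2%:Z), [:: 0; 0; 1; 0; 0; 0]); ((- 2%:Z), [:: 0; 0; 1; 0; 1; 0]); ((- 1%:Z), [:: 0; 0; 1; 0; 1; 1]); (1%:Z, [:: 0; 1; 0; 0; 2; 2]); (2%:Z, [:: 0; 1; 0; 1; 2; 2]); ((- 1%:Z), [:: 0; 1; 2; 1; 0; 2]); ((- 1%:Z), [:: 0; 1; 3; 0; 1; 2]); (1%:Z, [:: 0; 2; 2; 1; 3; 3])];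
  [:: ((- 1%:Z), [:: 0; 1; 0; 0; 2; 2]); ((- 1%:Z), [:: 0; 1; 2; 3; 2; 0])];
  [:: (1%:Z, [:: 0; 0; 1; 0; 0; 0]); (1%:Z, [:: 0; 0; 1; 0; 1; 0]); (2%:Z, [:: 0; 0; 1; 0; 1; 1]); ((- 1%:Z), [:: 0; 1; 0; 0; 2; 2]); ((- 1%:Z), [:: 0; 1; 0; 1; 2; 2]); (1%:Z, [:: 0; 1; 3; 0; 2; 1]); ((- 1%:Z), [:: 0; 2; 2; 1; 3; 3]); ((- 1%:Z), [:: 1; 0; 0; 0; 0; 3]); (1%:Z, [:: 1; 0; 1; 1; 0; 3]); (1%:Z, [:: 1; 0; 1; 1; 1; 1])];
  [:: ((- 1%:Z), [:: 0; 0; 0; 0; 0; 1]); ((- 1%:Z), [:: 0; 0; 1; 0; 0; 0]); ((- 1%:Z), [:: 0; 0; 1; 0; 1; 0]); (1%:Z, [:: 0; 0; 1; 0; 1; 1]); (1%:Z, [:: 0; 1; 0; 1; 2; 2]); ((- 1%:Z), [:: 0; 1; 2; 1; 0; 2]); ((- 1%:Z), [:: 0; 1; 3; 0; 1; 2]); (1%:Z, [:: 0; 1; 3; 0; 2; 1]); (1%:Z, [:: 1; 0; 1; 0; 0; 1]); ((- 1%:Z), [:: 1; 0; 1; 0; 0; 2]); (1%:Z, [:: 1; 0; 1; 1; 1; 2])];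
  [:: ((- 1%:Z), [:: 0; 0; 1; 0; 1; 0]); ((- 1%:Z), [:: 0; 0; 1; 0; 2; 0]); (1%:Z, [:: 0; 0; 1; 1; 0; 0]); (1%:Z, [:: 0; 1; 2; 3; 1; 0]); ((- 1%:Z), [:: 0; 1; 2; 3; 2; 3])];
  [:: (1%:Z, [:: 0; 0; 0; 0; 0; 1]); (2%:Z, [:: 0; 0; 1; 0; 0; 0]); (2%:Z, [:: 0; 0; 1; 0; 1; 0]); (1%:Z, [:: 0; 0; 1; 0; 1; 1]); ((- 1%:Z), [:: 0; 1; 0; 0; 2; 2]); ((- 2%:Z), [:: 0; 1; 0; 1; 2; 2]); (1%:Z, [:: 0; 1; 2; 1; 0; 2]); (1%:Z, [:: 0; 1; 3; 0; 1; 2]); ((- 1%:Z), [:: 0; 2; 2; 1; 3; 3]); ((- 1%:Z), [:: 1; 0; 0; 0; 0; 3]); ((- 1%:Z), [:: 1; 0; 1; 0; 0; 1]); (1%:Z, [:: 1; 0; 1; 0; 0; 2]); (1%:Z, [:: 1; 0; 1; 1; 0; 3]); ((- 1%:Z), [:: 1; 0; 1; 3; 3; 0])];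
  [:: ((- 1%:Z), [:: 0; 0; 0; 0; 0; 3]); ((- 2%:Z), [:: 0; 0; 1; 0; 0; 0]); ((- 1%:Z), [:: 0; 0; 1; 0; 1; 0]); ((- 1%:Z), [:: 0; 0; 1; 0; 1; 1]); (1%:Z, [:: 0; 0; 1; 0; 2; 0]); ((- 1%:Z), [:: 0; 0; 1; 1; 0; 0]); (1%:Z, [:: 0; 1; 0; 0; 2; 2]); (2%:Z, [:: 0; 1; 0; 1; 2; 2]); ((- 1%:Z), [:: 0; 1; 2; 1; 0; 2]); ((- 1%:Z), [:: 0; 1; 2; 3; 1; 0]); ((- 1%:Z), [:: 0; 1; 3; 0; 1; 2]); (1%:Z, [:: 0; 2; 2; 1; 3; 3]); (1%:Z, [:: 1; 0; 0; 0; 0; 3]); ((- 1%:Z), [:: 1; 0; 1; 0; 0; 2]); ((- 1%:Z), [:: 1; 0; 1; 1; 0; 3]); (1%:Z, [:: 1; 0; 1; 1; 2; 1])];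
  [:: ((- 1%:Z), [:: 0; 0; 0; 0; 0; 1]); (1%:Z, [:: 0; 0; 0; 0; 0; 3]); ((- 1%:Z), [:: 0; 0; 1; 0; 1; 0]); ((- 1%:Z), [:: 0; 0; 1; 0; 2; 0]); (1%:Z, [:: 0; 0; 1; 1; 0; 0]); (1%:Z, [:: 0; 1; 2; 3; 1; 0]); ((- 1%:Z), [:: 0; 1; 2; 3; 3; 2])];
  [:: (1%:Z, [:: 0; 0; 0; 0; 0; 1]); ((- 1%:Z), [:: 0; 0; 0; 0; 0; 2]); ((- 1%:Z), [:: 1; 0; 0; 0; 0; 3]); ((- 1%:Z), [:: 1; 0; 1; 0; 0; 1]); (1%:Z, [:: 1; 0; 1; 0; 0; 2]); ((- 1%:Z), [:: 1; 0; 1; 3; 3; 3])]].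
Local Close Scope nat_scope.

Definition certOf (t : Tr) : seq (int * seq nat) :=
  nth [::] certTable (16 * t.1.1 + 4 * t.1.2 + t.2)%N.
Definition tr (a b d : nat) : Tr := (z a, z b, z d).
Definition PL (x : 'Z_4) : lin Tr :=
  match nat_of_ord x with
  | O => [:: (1, tr 0 0 0)]
  | S O => [:: (1, tr 0 1 2); (-1, tr 1 0 0)]
  | S (S O) => [:: (1, tr 1 0 0)]
  | _ => [::]
  end.
Definition Pc (c : C2) : C1 := fun x => evalL (cT c) (PL x).
Definition psiL : lin Tr := [:: (1, tr 0 1 1); (-2, tr 0 1 2); (3, tr 1 0 0)].
Definition psi (c : C2) : int := evalL (cT c) psiL.
Definition uval (m : MV) (h g : GV) : int := if odd h && odd g then 1 else 0.
Definition RHS (t : Tr) : lin Tr :=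
  certL (certOf t) ++ (PL (muV t.1.1 + t.1.2) ++ scaleL (-1) (PL (t.1.2 + t.2)) ++ PL t.2)
    ++ scaleL (uval t.1.1 t.1.2 t.2) psiL.
Lemma RHS_check :
  all (fun t => all (fun s => coefL (RHS t) s == coefL [:: (1, t)] s) allT) allT.
Proof. by vm_compute. Qed.

Lemma main_id (c : C2) m h g :
  c m h g = certE c (certOf (m, h, g)) + d1 (Pc c) m h g + uval m h g * psi c.
Proof.
have E : evalL (cT c) (RHS (m, h, g)) = evalL (cT c) [:: (1, (m, h, g))].
  apply: evalL_ext => s.
  have /allP /(_ (m, h, g) (mem_allT _)) /allP /(_ s (mem_allT _)) /eqP := RHS_check.
  done.
move: E; rewrite /= mul1r addr0 /cT /= => <-.
rewrite /RHS !evalL_cat !evalL_scale evalL_certL /d1 /Pc /psi /= mulN1r !addrA.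
done.
Qed.

Definition d1lin (L : lin Tr) : lin 'Z_4 :=
  flatten [seq [:: (x.1, muV x.2.1.1 + x.2.1.2); (- x.1, x.2.1.2 + x.2.2); (x.1, x.2.2)] | x <- L].
Lemma evalL_d1lin (c1 : C1) L : evalL (cT (d1 c1)) L = evalL c1 (d1lin L).
Proof.
elim: L => [|x L IH] //.
change (d1lin (x :: L)) with
  ([:: (x.1, muV x.2.1.1 + x.2.1.2); (- x.1, x.2.1.2 + x.2.2); (x.1, x.2.2)] ++ d1lin L).
rewrite evalL_cat -IH /= /cT /d1 addr0 !mulrDr mulrN mulNr !addrA.
done.
Qed.
Lemma mem_z4s' : forall x : 'Z_4, x \in z4s. Proof. exact: mem_z4s. Qed.
Lemma psi_d1 (c1 : C1) : psi (d1 c1) = 2 * c1 (z 3).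
Proof.
have -> : 2 * c1 (z 3) = evalL c1 [:: (2, z 3)] by rewrite /= addr0.
rewrite /psi evalL_d1lin; apply: evalL_ext => s.
have H : all (fun s => coefL (d1lin psiL) s == coefL [:: (2, z 3)] s) z4s by vm_compute.
by move/allP: H => /(_ s (mem_z4s s)) /eqP.
Qed.

Definition w : C1 := fun g => if odd g then 1 else 0.
Lemma d1w m h g : d1 w m h g = uval m h g * 2.
Proof.
have H : all (fun t : Tr => d1 w t.1.1 t.1.2 t.2 == uval t.1.1 t.1.2 t.2 * 2) allT
  by vm_compute.
by move/allP: H => /(_ (m, h, g) (mem_allT _)) /eqP.
Qed.

Lemma u_cocycle n : cocycle2 n uval.
Proof.
have H : all (fun p => all (fun n => all (fun k => all (fun m => all (fun h =>
  all (fun g => d2 uval p n k m h g == 0) z4s) z4s) z4s) z4s) z4s) z4s by vm_compute.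
move=> p n' k m h g; rewrite /cong.
move/allP: H => /(_ p (mem_z4s _)) /allP /(_ n' (mem_z4s _)) /allP /(_ k (mem_z4s _))
  /allP /(_ m (mem_z4s _)) /allP /(_ h (mem_z4s _)) /allP /(_ g (mem_z4s _)) /eqP ->.
by rewrite subr0 dvdz0.
Qed.
Lemma psi_u : psi uval = 1.
Proof. by vm_compute. Qed.

Lemma re6 (x1 y1 x2 y2 x3 y3 : int) :
  (x1 + y1) - (x2 + y2) + (x3 + y3) = (x1 - x2 + x3) + (y1 - y2 + y3).
Proof. by rewrite opprD (addrACA x1 y1 (- x2) (- y2)) (addrACA (x1 - x2) (y1 - y2) x3 y3). Qed.
Lemma d1_lin (a b : C1) k m h g :
  d1 (fun x => a x + k * b x) m h g = d1 a m h g + k * d1 b m h g.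
Proof. by rewrite /d1 re6 mulrDr mulrBr. Qed.
Lemma re3 (c A p q : int) : c - (A + q) = (c - (A + p)) + (p - q).
Proof. by rewrite !opprD !addrA addrNK. Qed.

Lemma cocycle_cong n c m h g : cocycle2 n c ->
  (n%:Z %| c m h g - (d1 (Pc c) m h g + uval m h g * psi c))%Z.
Proof.
move=> Hc; rewrite {1}(main_id c m h g) -(addrA (certE _ _)) addrK.
exact: certE_dvd.
Qed.

Lemma cob_of n c k : cocycle2 n c -> (n%:Z %| psi c - k * 2)%Z -> coboundary2 n c.
Proof.
move=> Hc Hk; exists (fun x => Pc c x + k * w x) => m h g.
rewrite /cong d1_lin d1w mulrCA (re3 _ _ (uval m h g * psi c)) -mulrBr.
by apply: rpredD; [exact: cocycle_cong | exact: dvdz_mull].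
Qed.

Lemma evalL_dvd d (f : Tr -> int) (L : lin Tr) :
  (forall t, (d %| f t)%Z) -> (d %| evalL f L)%Z.
Proof.
move=> H; elim: L => [|x L IH] /=; first exact: dvdz0.
by apply: rpredD => //; apply: dvdz_mull.
Qed.
Lemma evalL_sub (f f' : Tr -> int) (L : lin Tr) :
  evalL f L - evalL f' L = evalL (fun t => f t - f' t) L.
Proof.
elim: L => [|x L IH] /=; first by rewrite subr0.
by rewrite -IH mulrBr opprD addrACA.
Qed.

Lemma Z2cast (x : int) : ((x%:~R : 'Z_2) = 0) <-> (2 %| x)%Z.
Proof.
have E2 : (2%:~R : 'Z_2) = 0 by apply/eqP.
rewrite {1}(divz_eq x 2) intrD intrM E2 mulr0 add0r.
have G0 := modz_ge0 x (isT : (2:int) != 0); have G1 := ltz_pmod x (isT : (0:int) < 2).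
split.
  move=> H0; apply/dvdz_mod0P; move: H0 G0 G1.
  by case: (x %% 2)%Z => [[|[|r]]|r].
by move/dvdz_mod0P ->.
Qed.

Definition phi (c : C2) : 'Z_2 := (psi c)%:~R.

Theorem mainTheorem19 (n : nat) :
  (~~ odd n ->
     exists phi : C2 -> 'Z_2,
       (forall c c', cocycle2 n c -> cocycle2 n c' ->
           phi (addC2 c c') = phi c + phi c')
       /\ (exists c, cocycle2 n c /\ phi c = 1)
       /\ (forall c, cocycle2 n c -> (phi c = 0 <-> coboundary2 n c)))
  /\
  (odd n -> forall c, cocycle2 n c -> coboundary2 n c).
Proof.
split.
  move=> En; exists phi; split.
    move=> c c' _ _; rewrite /phi -intrD; congr (_%:~R).
    exact: (evalL_add (cT c) (cT c')).
  split.
    by exists uval; split; [exact: u_cocycle | rewrite /phi psi_u].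
  move=> c Hc; split.
    move/Z2cast => H2; apply: (cob_of (k := (psi c %/ 2)%Z)) => //.
    by rewrite divzK // subrr dvdz0.
  case=> c1 Hc1; apply/Z2cast.
  have n2 : (2 %| n%:Z)%Z by rewrite dvdzE /= dvdn2.
  rewrite -(subrK (psi (d1 c1)) (psi c)); apply: rpredD; last first.
    by rewrite psi_d1; exact: dvdz_mulr.
  rewrite /psi evalL_sub; apply: evalL_dvd => t.
  exact: dvdz_trans n2 (Hc1 t.1.1 t.1.2 t.2).
move=> On c Hc; apply: (cob_of (k := psi c * ((n.+1)./2)%:Z)) => //.
have E : ((n.+1)./2)%:Z * 2 = n%:Z + 1.
  have := odd_double_half n.+1; rewrite /= On /= add0n => E.
  by rewrite -[2]/(2%:Z) -PoszM muln2 E -addn1 PoszD.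
rewrite -mulrA E mulrDr mulr1 opprD addrCA subrr addr0.
by rewrite rpredN; apply: dvdz_mull; apply: dvdzz.
Qed.
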